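(* On the two coordinate axes consider the inner product $$\langle f,g\rangle=\int_{\mathbb R}f(x,0)g(x,0)e^{-x^2}dx+\int_{\mathbb R}f(0,y)g(0,y)e^{-y^2}dy .$$ Define $$Y_{n,1}(x,y)=H_n(x)+H_n(y)-H_n(0)\ (n\ge0),$$ $$Y_{2n,2}(x,y)=x^2L_{n-1}^{\frac32}(x^2)-y^2L_{n-1}^{\frac32}(y^2)\ (n\ge1),\qquad Y_{2n+1,2}(x,y)=x\,L_n^{\frac12}(x^2)-y\,L_n^{\frac12}(y^2)\ (n\ge0).$$ Then for every $m\ge1$, $Y_{m,1}$ and $Y_{m,2}$ are polynomials of degree $m$ which are orthogonal (with respect to $\langle\cdot,\cdot\rangle$) to all polynomials of degree less than $m$ and to each other; that is, they are mutually orthogonal elements of $\mathcal H_m$.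
   Context: $H_n$ denotes the Hermite polynomial of degree $n$ (orthogonal with respect to $e^{-x^2}$ on $\mathbb R$), and $L_n^{\alpha}$ the Laguerre polynomial of degree $n$ (orthogonal with respect to $t^{\alpha}e^{-t}$ on $[0,\infty)$). $\mathcal H_m$ is the space of polynomials of degree $m$ in two variables orthogonal to all polynomials of lower degree, modulo the ideal $\langle xy\rangle$. *)

(* Defs.v *)
From Stdlib Require Import Reals Lra Lia.
Open Scope R_scope.

(* Physicists' Hermite polynomials (orthogonal w.r.t. exp(-x^2)):
   H_0 = 1, H_1 = 2x, H_{n+1} = 2x H_n - 2n H_{n-1}.
   hermite_pair n x = (H_n x, H_{n+1} x). *)
Fixpoint hermite_pair (n : nat) (x : R) : R * R :=
  match n with
  | O => (1, 2 * x)
  | S k => let (h0, h1) := hermite_pair k x in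
           (h1, 2 * x * h1 - 2 * INR (S k) * h0)
  end.
Definition hermite (n : nat) (x : R) : R := fst (hermite_pair n x).

(* Generalized Laguerre polynomials L_n^a (orthogonal w.r.t. t^a e^{-t}):
   L_0 = 1, L_1 = 1 + a - t,
   (n+1) L_{n+1} = (2n+1+a-t) L_n - (n+a) L_{n-1}. *)
Fixpoint laguerre_pair (a : R) (n : nat) (t : R) : R * R :=
  match n with
  | O => (1, 1 + a - t)
  | S k => let (l0, l1) := laguerre_pair a k t in
           (l1, ((2 * INR (S k) + 1 + a - t) * l1 - (INR (S k) + a) * l0)
                / INR (S (S k)))
  end.
Definition laguerre (a : R) (n : nat) (t : R) : R := fst (laguerre_pair a n t).

Definition Y1 (n : nat) (x y : R) : R := hermite n x + hermite n y - hermite n 0.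

(* Y_{2n,2}(x,y) = x^2 L_{n-1}^{3/2}(x^2) - y^2 L_{n-1}^{3/2}(y^2)   (n >= 1),
   Y_{2n+1,2}(x,y) = x L_n^{1/2}(x^2) - y L_n^{1/2}(y^2)              (n >= 0).
   (Only used for m >= 1.) *)
Definition Y2 (m : nat) (x y : R) : R :=
  if Nat.even m then
    x ^ 2 * laguerre (3 / 2) (Nat.div2 m - 1) (x ^ 2)
    - y ^ 2 * laguerre (3 / 2) (Nat.div2 m - 1) (y ^ 2)
  else
    x * laguerre (1 / 2) (Nat.div2 m) (x ^ 2)
    - y * laguerre (1 / 2) (Nat.div2 m) (y ^ 2).

Definition poly2_eval (c : nat -> nat -> R) (N : nat) (x y : R) : R :=
  sum_f_R0 (fun i => sum_f_R0 (fun j => c i j * x ^ i * y ^ j) N) N.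

Definition poly2_deg_le (f : R -> R -> R) (d : nat) : Prop :=
  exists c : nat -> nat -> R,
    (forall i j, (d < i + j)%nat -> c i j = 0) /\
    (forall x y, f x y = poly2_eval c d x y).

Definition poly2_deg (f : R -> R -> R) (d : nat) : Prop :=
  exists c : nat -> nat -> R,
    (forall i j, (d < i + j)%nat -> c i j = 0) /\
    (exists i j, (i + j = d)%nat /\ c i j <> 0) /\
    (forall x y, f x y = poly2_eval c d x y).

Definition improper_integral_R (h : R -> R) (l : R) : Prop :=
  (forall a b : R, a <= b -> exists _ : Riemann_integrable h a b, True) /\
  (forall eps : R, eps > 0 -> exists M : R, forall (a b : R)
     (pr : Riemann_integrable h a b),
     a <= - M -> M <= b -> Rabs (RiemannInt pr - l) < eps).

Definition axes_inner (f g : R -> R -> R) (v : R) : Prop :=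
  exists l1 l2 : R,
    improper_integral_R (fun x => f x 0 * g x 0 * exp (- x ^ 2)) l1 /\
    improper_integral_R (fun y => f 0 y * g 0 y * exp (- y ^ 2)) l2 /\
    l1 + l2 = v.

Definition axes_orth (f g : R -> R -> R) : Prop := axes_inner f g 0.

(* Main.v *)
Require Import Defs.
From Stdlib Require Import Reals Lra Lia Classical.
From Coquelicot Require Import Coquelicot.
Open Scope R_scope.

Definition gi (h : R -> R) (l : R) : Prop :=
  (forall x, continuous h x) /\
  (forall eps, 0 < eps -> exists M, forall a b, a <= -M -> M <= b ->
      Rabs (RInt h a b - l) < eps).

Lemma gi_ex (h : R -> R) a b : (forall x, continuous h x) -> ex_RInt h a b.
Proof. intros H; apply (ex_RInt_continuous (V:=R_CompleteNormedModule)); intros; apply H. Qed.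

Lemma gi_improper h l : gi h l -> improper_integral_R h l.
Proof.
  intros [Hc Hl]; split.
  - intros a b _. exists (ex_RInt_Reals_0 _ _ _ (gi_ex h a b Hc)). exact I.
  - intros eps He. destruct (Hl eps He) as [M HM]. exists M.
    intros a b pr Ha Hb. rewrite <- RInt_Reals. now apply HM.
Qed.

Lemma gi_ext h k l : gi h l -> (forall x, h x = k x) -> gi k l.
Proof.
  intros [Hc Hl] E; split.
  - intros x. apply (continuous_ext h); auto.
  - intros eps He; destruct (Hl eps He) as [M HM]; exists M; intros a b Ha Hb.
    rewrite <- (RInt_ext h). now apply HM. intros; auto.
Qed.

Lemma gi_plus h k l1 l2 : gi h l1 -> gi k l2 -> gi (fun x => h x + k x) (l1 + l2).
Proof.
  intros [Hc Hl] [Kc Kl]; split.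
  - intros x; apply (continuous_plus h k); auto.
  - intros eps He. destruct (Hl (eps/2)) as [M1 H1]; [lra|].
    destruct (Kl (eps/2)) as [M2 H2]; [lra|].
    exists (Rmax M1 M2); intros a b Ha Hb.
    assert (E: RInt (fun x => h x + k x) a b = RInt h a b + RInt k a b).
    { apply (RInt_plus h k); apply gi_ex; auto. }
    rewrite E.
    assert (A1 := H1 a b ltac:(pose proof (Rmax_l M1 M2); lra) ltac:(pose proof (Rmax_l M1 M2); lra)).
    assert (A2 := H2 a b ltac:(pose proof (Rmax_r M1 M2); lra) ltac:(pose proof (Rmax_r M1 M2); lra)).
    revert A1 A2. unfold Rabs; repeat destruct Rcase_abs; lra.
Qed.

Lemma gi_scal c h l : gi h l -> gi (fun x => c * h x) (c * l).
Proof.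
  intros [Hc Hl]; split.
  - intros x; apply (continuous_mult (fun _ => c) h); auto. apply continuous_const.
  - intros eps He.
    destruct (Hl (eps / (Rabs c + 1))) as [M HM].
    { apply Rdiv_lt_0_compat; auto. pose proof (Rabs_pos c); lra. }
    exists M; intros a b Ha Hb.
    assert (E: RInt (fun x => c * h x) a b = c * RInt h a b).
    { apply (RInt_scal h); apply gi_ex; auto. }
    rewrite E. replace (c * RInt h a b - c * l) with (c * (RInt h a b - l)) by ring.
    rewrite Rabs_mult. specialize (HM a b Ha Hb).
    pose proof (Rabs_pos c). pose proof (Rabs_pos (RInt h a b - l)).
    apply Rle_lt_trans with (Rabs c * (eps / (Rabs c + 1))).
    + apply Rmult_le_compat_l; lra.
    + apply Rlt_le_trans with ((Rabs c + 1) * (eps / (Rabs c + 1))).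
      * apply Rmult_lt_compat_r; [apply Rdiv_lt_0_compat|]; lra.
      * right; field; lra.
Qed.

Lemma mono_lim (F : R -> R) B : (forall x y, 0 <= x <= y -> F x <= F y) ->
  (forall x, 0 <= x -> F x <= B) ->
  exists L, forall eps, 0 < eps -> exists M, 0 <= M /\ forall x, M <= x -> Rabs (F x - L) < eps.
Proof.
  intros Hm Hb.
  set (E := fun y => exists x, 0 <= x /\ y = F x).
  destruct (completeness E) as [L [HL1 HL2]].
  { exists B; intros y [x [Hx ->]]; auto. }
  { exists (F 0); exists 0; split; [lra|auto]. }
  exists L; intros eps He.
  destruct (classic (exists x, 0 <= x /\ L - eps < F x)) as [[x0 [Hx0 Hlt]]|Hn].
  - exists x0; split; auto. intros x Hx.
    assert (F x0 <= F x) by (apply Hm; lra).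
    assert (F x <= L) by (apply HL1; exists x; split; [lra|auto]).
    unfold Rabs; destruct Rcase_abs; lra.
  - exfalso. assert (L <= L - eps); [|lra].
    apply HL2. intros y [x [Hx ->]].
    destruct (Rle_dec (F x) (L - eps)) as [h|h]; auto.
    exfalso; apply Hn; exists x; split; auto; lra.
Qed.

Lemma atan_int D a b : is_RInt (fun x => D / (1 + x^2)) a b (D * atan b - D * atan a).
Proof.
  replace (D * atan b - D * atan a) with (minus ((fun x => D * atan x) b) ((fun x => D * atan x) a)) by reflexivity.
  apply (is_RInt_derive (V:=R_CompleteNormedModule) (fun x => D * atan x)).
  - intros x _. 
    replace (D / (1 + x^2)) with (D * / (1 + x^2)) by (unfold Rdiv; ring).
    apply (is_derive_scal (fun x => atan x)). apply is_derive_Reals. apply derivable_pt_lim_atan.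
  - intros x _. apply (ex_derive_continuous (K:=R_AbsRing) (V:=R_NormedModule)). auto_derive.
    pose proof (pow2_ge_0 x). lra.
Qed.

Lemma int_bound (h : R -> R) D a b : a <= b -> (forall x, continuous h x) ->
  (forall x, h x <= D / (1 + x^2)) -> RInt h a b <= D * atan b - D * atan a.
Proof.
  intros Hab Hc Hh. rewrite <- (is_RInt_unique _ _ _ _ (atan_int D a b)).
  apply RInt_le; auto. apply gi_ex; auto. eexists; apply atan_int.
Qed.

Lemma gi_dom_pos (h : R -> R) D : (forall x, continuous h x) ->
  (forall x, 0 <= h x <= D / (1 + x^2)) -> exists l, gi h l.
Proof.
  intros Hc Hh.
  assert (HD : 0 <= D). { destruct (Hh 0) as [h1 h2]. replace (D / (1 + 0^2)) with D in h2 by (simpl; field). lra. }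
  assert (Hp : forall x y, x <= y -> 0 <= RInt h x y).
  { intros x y Hxy. apply RInt_ge_0; auto. apply gi_ex; auto. intros; apply Hh. }
  assert (Ch : forall x y z, RInt h x y + RInt h y z = RInt h x z).
  { intros. apply (RInt_Chasles (V:=R_CompleteNormedModule)); apply gi_ex; auto. }
  assert (Hup : forall x y, x <= y -> RInt h x y <= D * PI).
  { intros x y Hxy. eapply Rle_trans. apply int_bound; auto. intros; apply Hh.
    pose proof (atan_bound x); pose proof (atan_bound y).
    assert (D * atan y - D * atan x = D * (atan y - atan x)) as -> by ring.
    apply Rmult_le_compat_l; lra. }
  destruct (mono_lim (fun b => RInt h 0 b) (D * PI)) as [L1 HL1].
  { intros x y Hxy. rewrite <- (Ch 0 x y). pose proof (Hp x y ltac:(lra)). lra. }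
  { intros x Hx. apply Hup; lra. }
  destruct (mono_lim (fun a => RInt h (- a) 0) (D * PI)) as [L2 HL2].
  { intros x y Hxy. rewrite <- (Ch (-y) (-x) 0). pose proof (Hp (-y) (-x) ltac:(lra)). lra. }
  { intros x Hx. apply Hup; lra. }
  exists (L2 + L1); split; auto.
  intros eps He. destruct (HL1 (eps/2)) as [M1 [HM1 H1]]; [lra|].
  destruct (HL2 (eps/2)) as [M2 [HM2 H2]]; [lra|].
  exists (Rmax M1 M2); intros a b Ha Hb.
  pose proof (Rmax_l M1 M2); pose proof (Rmax_r M1 M2).
  rewrite <- (Ch a 0 b).
  specialize (H1 b ltac:(lra)). specialize (H2 (-a) ltac:(lra)).
  rewrite Ropp_involutive in H2. revert H1 H2. unfold Rabs; repeat destruct Rcase_abs; lra.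
Qed.

Lemma gi_dom (h : R -> R) D : (forall x, continuous h x) ->
  (forall x, Rabs (h x) <= D / (1 + x^2)) -> exists l, gi h l.
Proof.
  intros Hc Hh.
  assert (Ca : forall x, continuous (fun y => Rabs (h y)) x).
  { intros; apply continuous_Rabs_comp; auto. }
  destruct (gi_dom_pos (fun x => (Rabs (h x) + h x) / 2) D) as [l1 G1].
  { intros x. apply (continuous_mult (fun y => Rabs (h y) + h y) (fun _ => / 2)).
    apply (continuous_plus (fun y => Rabs (h y)) h); auto. apply continuous_const. }
  { intros x; specialize (Hh x). revert Hh. unfold Rabs; destruct Rcase_abs; intros; split; lra. }
  destruct (gi_dom_pos (fun x => (Rabs (h x) - h x) / 2) D) as [l2 G2].
  { intros x. apply (continuous_mult (fun y => Rabs (h y) - h y) (fun _ => / 2)).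
    apply (continuous_minus (fun y => Rabs (h y)) h); auto. apply continuous_const. }
  { intros x; specialize (Hh x). revert Hh. unfold Rabs; destruct Rcase_abs; intros; split; lra. }
  exists (l1 + (-1) * l2). eapply gi_ext. apply gi_plus. apply G1. apply gi_scal. apply G2.
  intros x; simpl; field.
Qed.

Inductive pf : (R -> R) -> Prop :=
| pf_c c : pf (fun _ => c)
| pf_x : pf (fun x => x)
| pf_add f g : pf f -> pf g -> pf (fun x => f x + g x)
| pf_mul f g : pf f -> pf g -> pf (fun x => f x * g x)
| pf_ext f g : pf f -> (forall x, f x = g x) -> pf g.

Lemma pf_der f : pf f -> forall x, ex_derive f x.
Proof.
  induction 1; intros x.
  - apply ex_derive_const.
  - apply ex_derive_id.
  - apply (ex_derive_plus f g); auto.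
  - apply (ex_derive_mult f g); auto.
  - apply (ex_derive_ext f); auto.
Qed.

Lemma pf_ge f : pf f -> forall x, ex_derive (fun y => f y * exp (- y ^ 2)) x.
Proof.
  intros Hf x. apply (ex_derive_mult f (fun y => exp (- y^2))). apply pf_der; auto.
  auto_derive; auto.
Qed.

Lemma pf_cont f : pf f -> forall x, continuous (fun y => f y * exp (- y ^ 2)) x.
Proof. intros Hf x. apply (ex_derive_continuous (K:=R_AbsRing) (V:=R_NormedModule)). apply pf_ge; auto. Qed.

Lemma pf_growth f : pf f -> exists C K, 0 <= C /\ forall x, Rabs (f x) <= C * (1 + x^2)^K.
Proof.
  induction 1.
  - exists (Rabs c), 0%nat; split; [apply Rabs_pos|]; intros; simpl; lra.
  - exists 1, 1%nat; split; [lra|]; intros x; simpl.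
    unfold Rabs; destruct Rcase_abs; nra.
  - destruct IHpf1 as [C1 [K1 [H1 H1']]]; destruct IHpf2 as [C2 [K2 [H2 H2']]].
    exists (C1 + C2), (K1 + K2)%nat; split; [lra|]; intros x.
    assert (1 <= 1 + x^2) by (pose proof (pow2_ge_0 x); lra).
    pose proof (Rle_pow (1 + x^2) K1 (K1+K2) H3 ltac:(lia)).
    pose proof (Rle_pow (1 + x^2) K2 (K1+K2) H3 ltac:(lia)).
    eapply Rle_trans. apply Rabs_triang.
    specialize (H1' x); specialize (H2' x). nra.
  - destruct IHpf1 as [C1 [K1 [H1 H1']]]; destruct IHpf2 as [C2 [K2 [H2 H2']]].
    exists (C1 * C2), (K1 + K2)%nat; split; [nra|]; intros x.
    rewrite Rabs_mult, pow_add.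
    specialize (H1' x); specialize (H2' x).
    pose proof (Rabs_pos (f x)); pose proof (Rabs_pos (g x)).
    replace (C1 * C2 * ((1 + x ^ 2) ^ K1 * (1 + x ^ 2) ^ K2)) with
      ((C1 * (1 + x ^ 2) ^ K1) * (C2 * (1 + x ^ 2) ^ K2)) by ring.
    apply Rmult_le_compat; auto.
  - destruct IHpf as [C [K [H1 H2]]]; exists C, K; split; auto; intros x; rewrite <- H0; auto.
Qed.

Lemma exp_n n y : exp (INR n * y) = exp y ^ n.
Proof.
  induction n. simpl. rewrite Rmult_0_l, exp_0; auto.
  rewrite S_INR, Rmult_plus_distr_r, Rmult_1_l, exp_plus, IHn. simpl; ring.
Qed.

Lemma exp_poly_bound n x : (1 <= n)%nat -> (1 + x^2)^n * exp (- x^2) <= INR n ^ n.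
Proof.
  intros Hn. assert (Hn' : 1 <= INR n) by (apply (le_INR 1); auto).
  set (y := x^2). assert (Hy : 0 <= y) by apply pow2_ge_0.
  assert (E: exp y = exp (y / INR n) ^ n).
  { rewrite <- exp_n. f_equal. field. lra. }
  assert (B1 : 1 + y <= INR n * (1 + y / INR n)).
  { replace (INR n * (1 + y / INR n)) with (INR n + y) by (field; lra). lra. }
  assert (B2 : (1 + y)^n <= INR n ^ n * exp y).
  { rewrite E, <- Rpow_mult_distr. apply pow_incr. split; [lra|].
    eapply Rle_trans. apply B1. apply Rmult_le_compat_l; [lra|]. apply exp_ineq1_le. }
  rewrite exp_Ropp. pose proof (exp_pos y).
  apply (Rmult_le_reg_r (exp y)); auto. rewrite Rmult_assoc, Rinv_l; lra.
Qed.

Lemma pf_bound f : pf f -> exists D, 0 <= D /\ forall x, Rabs (f x * exp (- x^2)) <= D / (1 + x^2).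
Proof.
  intros Hf. destruct (pf_growth f Hf) as [C [K [HC HK]]].
  exists (C * INR (S K) ^ (S K)). split.
  { apply Rmult_le_pos; auto. apply pow_le. apply pos_INR. }
  intros x. rewrite Rabs_mult, (Rabs_right (exp _)) by (left; apply exp_pos).
  pose proof (exp_poly_bound (S K) x ltac:(lia)).
  assert (Hx : 0 < 1 + x^2) by (pose proof (pow2_ge_0 x); lra).
  apply (Rmult_le_reg_r (1 + x^2)); auto.
  replace (C * INR (S K) ^ S K / (1 + x ^ 2) * (1 + x ^ 2)) with (C * INR (S K) ^ S K) by (field; lra).
  simpl in H |- *.
  pose proof (exp_pos (- x^2)). pose proof (HK x).
  apply Rle_trans with (C * (1 + x^2)^K * exp (- x^2) * (1 + x^2)).
  - apply Rmult_le_compat_r; [lra|]. apply Rmult_le_compat_r; lra.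
  - replace (C * (1 + x^2)^K * exp (- x^2) * (1 + x^2)) with (C * ((1 + x ^ 2) * (1 + x ^ 2) ^ K * exp (- x ^ 2))) by ring.
    apply Rmult_le_compat_l; auto.
Qed.

Lemma gi_pf f : pf f -> exists l, gi (fun x => f x * exp (- x^2)) l.
Proof.
  intros Hf. destruct (pf_bound f Hf) as [D [_ HD]]. apply (gi_dom _ D); auto. apply pf_cont; auto.
Qed.

Lemma decay f : pf f -> forall eps, 0 < eps -> exists M, 0 <= M /\ forall x, M <= Rabs x ->
  Rabs (f x * exp (- x^2)) < eps.
Proof.
  intros Hf eps He. destruct (pf_bound f Hf) as [D [HD Hb]].
  exists (D / eps + 1). split. { assert (0 <= D / eps) by (apply Rdiv_le_0_compat; lra). lra. }
  intros x Hx. eapply Rle_lt_trans. apply Hb.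
  assert (0 <= D / eps) by (apply Rdiv_le_0_compat; lra).
  assert (Hx2 : Rabs x <= x^2).
  { revert Hx. unfold Rabs; destruct Rcase_abs; intros; nra. }
  assert (D < eps * (1 + x^2)).
  { assert (D = eps * (D / eps)) by (field; lra). nra. }
  apply (Rmult_lt_reg_r (1 + x^2)). pose proof (pow2_ge_0 x); lra.
  unfold Rdiv; rewrite Rmult_assoc, Rinv_l. lra. pose proof (pow2_ge_0 x); lra.
Qed.

Lemma gi_exact Q dQ : pf Q -> pf dQ -> (forall x, is_derive Q x (dQ x)) ->
  gi (fun x => (dQ x - 2 * x * Q x) * exp (- x^2)) 0.
Proof.
  intros HQ HdQ HD.
  assert (Hpf : pf (fun x => dQ x + -2 * (x * Q x))).
  { apply (pf_add dQ (fun x => (-2) * (x * Q x))). auto. apply (pf_mul (fun _ => -2)). constructor.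
    apply (pf_mul (fun x => x)); auto. constructor. }
  assert (Hpf' : pf (fun x => dQ x - 2 * x * Q x)).
  { eapply pf_ext. apply Hpf. intros; simpl; ring. }
  split. { apply (pf_cont _ Hpf'). }
  intros eps He. destruct (decay Q HQ (eps/2)) as [M [HM HMb]]; [lra|].
  exists M; intros a b Ha Hb.
  assert (E : RInt (fun x => (dQ x - 2 * x * Q x) * exp (- x^2)) a b =
    Q b * exp (- b^2) - Q a * exp (- a^2)).
  { apply is_RInt_unique.
    apply (is_RInt_derive (V:=R_CompleteNormedModule) (fun x => Q x * exp (- x^2))).
    - intros x _.
      assert (D1 : is_derive (fun y => exp (- y^2)) x (- (2 * x) * exp (- x^2))).
      { auto_derive; auto. simpl. ring. }
      assert (H1 := is_derive_mult Q (fun y => exp (- y^2)) x (dQ x) _ (HD x) D1 (fun n m => Rmult_comm n m)).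
      replace ((dQ x - 2 * x * Q x) * exp (- x ^ 2)) with
        (dQ x * exp (-x^2) + Q x * (- (2 * x) * exp (- x ^ 2))) by ring.
      exact H1.
    - intros x _. apply (pf_cont _ Hpf'). }
  rewrite E.
  assert (A1 := HMb b ltac:(unfold Rabs; destruct Rcase_abs; lra)).
  assert (A2 := HMb a ltac:(unfold Rabs; destruct Rcase_abs; lra)).
  revert A1 A2; unfold Rabs; repeat destruct Rcase_abs; lra.
Qed.
Ltac rg := match goal with |- ?a = ?b => change (@eq R a b) end; ring.

Lemma isd_mult (f g : R -> R) x df dg : is_derive f x df -> is_derive g x dg ->
  is_derive (fun y => f y * g y) x (df * g x + f x * dg).
Proof.
  intros H1 H2. assert (H := is_derive_mult f g x df dg H1 H2 (fun n m => Rmult_comm n m)).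
  exact H.
Qed.

Lemma isd_plus (f g : R -> R) x df dg : is_derive f x df -> is_derive g x dg ->
  is_derive (fun y => f y + g y) x (df + dg).
Proof. intros H1 H2. exact (is_derive_plus f g x df dg H1 H2). Qed.

Lemma isd_eq (f : R -> R) x d d' : is_derive f x d -> d = d' -> is_derive f x d'.
Proof. intros H ->; exact H. Qed.

Lemma isd_ext (f g : R -> R) x d : is_derive f x d -> (forall y, f y = g y) -> is_derive g x d.
Proof. intros H E. apply (is_derive_ext f); auto. Qed.

Lemma isd_const c x : is_derive (fun _ => c) x 0.
Proof. apply (is_derive_const (K:=R_AbsRing) (V:=R_NormedModule) c). Qed.

Lemma isd_id x : is_derive (fun y => y) x 1.
Proof. apply (is_derive_id (K:=R_AbsRing)). Qed.

Lemma isd_pow n x : is_derive (fun y => y ^ S n) x (INR (S n) * x ^ n).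
Proof.
  induction n.
  - eapply isd_ext. eapply isd_eq. apply isd_id. simpl; ring. intros; simpl; ring.
  - eapply isd_ext. eapply isd_eq. apply (isd_mult (fun y => y) (fun y => y ^ S n)).
    apply isd_id. apply IHn. rewrite !S_INR. simpl. ring. intros; simpl; ring.
Qed.

Lemma hermite_pair_eq n x : hermite_pair n x = (hermite n x, hermite (S n) x).
Proof.
  induction n. reflexivity.
  unfold hermite at 2. simpl hermite_pair at 2. rewrite IHn. simpl.
  unfold hermite at 1. simpl. rewrite IHn. reflexivity.
Qed.

Lemma hermite_0 x : hermite 0 x = 1. Proof. reflexivity. Qed.
Lemma hermite_1 x : hermite 1 x = 2 * x. Proof. reflexivity. Qed.
Lemma hermite_SS k x : hermite (S (S k)) x = 2 * x * hermite (S k) x - 2 * INR (S k) * hermite k x.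
Proof.
  unfold hermite at 1. simpl hermite_pair. rewrite hermite_pair_eq. reflexivity.
Qed.

Definition dH (n : nat) (x : R) : R :=
  match n with O => 0 | S k => 2 * INR (S k) * hermite k x end.

Lemma hermite_S_dH n x : hermite (S n) x = 2 * x * hermite n x - dH n x.
Proof. destruct n. simpl. rewrite hermite_0, hermite_1. ring. rewrite hermite_SS. reflexivity. Qed.

Lemma hermite_der n x : is_derive (hermite n) x (dH n x).
Proof.
  revert x. cut (forall x, is_derive (hermite n) x (dH n x) /\ is_derive (hermite (S n)) x (dH (S n) x)).
  { intros H x; apply H. }
  induction n; intros x.
  - split.
    + eapply isd_ext. apply isd_const. intros; rewrite hermite_0; auto.
    + eapply isd_ext. eapply isd_eq. apply (isd_mult (fun _ => 2) (fun y => y)).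
      apply isd_const. apply isd_id. simpl. rewrite hermite_0; ring. intros; rewrite hermite_1; auto.
  - split. apply IHn.
    eapply isd_ext. eapply isd_eq.
    apply (isd_plus (fun y => 2 * y * hermite (S n) y) (fun y => (- (2 * INR (S n))) * hermite n y)).
    + apply (isd_mult (fun y => 2 * y) (hermite (S n))).
      eapply isd_ext. eapply isd_eq. apply (isd_mult (fun _ => 2) (fun y => y)). apply isd_const. apply isd_id.
      reflexivity. intros; reflexivity. apply IHn.
    + apply (isd_mult (fun _ => _) (hermite n)). apply isd_const. apply IHn.
    + cbv beta iota delta [dH]. rewrite (hermite_S_dH n x). destruct n.
      * simpl. rewrite ?hermite_0, ?hermite_1. simpl. ring.
      * cbv beta iota delta [dH]. rewrite !S_INR. simpl. ring.
    + intros y. rewrite hermite_SS. ring.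
Qed.

Lemma pf_pow n : pf (fun x => x ^ n).
Proof.
  induction n. eapply pf_ext. apply (pf_c 1). intros; simpl; auto.
  eapply pf_ext. apply (pf_mul (fun x => x)). constructor. apply IHn. intros; simpl; auto.
Qed.

Lemma pf_scal c f : pf f -> pf (fun x => c * f x).
Proof. intros H. apply (pf_mul (fun _ => c)); auto. constructor. Qed.

Lemma pf_hermite n : pf (hermite n).
Proof.
  cut (pf (hermite n) /\ pf (hermite (S n))). tauto.
  induction n.
  - split. eapply pf_ext. apply (pf_c 1). intros; rewrite hermite_0; auto.
    eapply pf_ext. apply (pf_scal 2). apply pf_x. intros; rewrite hermite_1; auto.
  - split. tauto. eapply pf_ext.
    apply (pf_add (fun y => (2 * y) * hermite (S n) y) (fun y => (- (2 * INR (S n))) * hermite n y)).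
    apply (pf_mul (fun y => 2 * y)). apply pf_scal, pf_x. tauto. apply pf_scal; tauto.
    intros y; rewrite hermite_SS; ring.
Qed.

Lemma pf_dH n : pf (dH n).
Proof. destruct n. apply (pf_ext (fun _ => 0)). apply pf_c. reflexivity. apply (pf_scal _ (hermite n)), pf_hermite. Qed.

Lemma hermite_orth k m : (k < m)%nat -> gi (fun x => x ^ k * hermite m x * exp (- x^2)) 0.
Proof.
  revert m; induction k; intros m Hkm.
  - destruct m as [|m']; [lia|].
    eapply gi_ext. apply (gi_exact (fun x => - hermite m' x) (fun x => - dH m' x)).
    apply (pf_ext (fun x => (-1) * hermite m' x)). apply pf_scal, pf_hermite. intros; simpl; ring.
    apply (pf_ext (fun x => (-1) * dH m' x)). apply pf_scal, pf_dH. intros; simpl; ring.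
    intros x. eapply isd_ext. eapply isd_eq. apply (isd_mult (fun _ => -1) (hermite m')).
    apply isd_const. apply hermite_der. match goal with |- ?a = ?b => change (@eq R a b) end. simpl. lra. intros; simpl; ring.
    intros x. rewrite hermite_S_dH. simpl; ring.
  - destruct m as [|m'']; [lia|].
    assert (IH := IHk m'' ltac:(lia)).
    replace 0 with (0 + INR (S k) * 0) by ring.
    eapply gi_ext. apply gi_plus.
    apply (gi_exact (fun x => - (x ^ S k * hermite m'' x))
                    (fun x => - (INR (S k) * x ^ k * hermite m'' x + x ^ S k * dH m'' x))).
    + apply (pf_ext (fun x => (-1) * (x ^ S k * hermite m'' x))). apply pf_scal.
      apply (pf_mul (fun x => x ^ S k)). apply pf_pow. apply pf_hermite. intros; simpl; ring.
    + apply (pf_ext (fun x => (-1) * ((INR (S k) * x ^ k) * hermite m'' x + x ^ S k * dH m'' x))).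
      apply pf_scal. apply (pf_add (fun x => (INR (S k) * x ^ k) * hermite m'' x)).
      apply (pf_mul (fun x => INR (S k) * x ^ k)). apply pf_scal, pf_pow. apply pf_hermite.
      apply (pf_mul (fun x => x ^ S k)). apply pf_pow. apply pf_dH. intros; simpl; ring.
    + intros x. eapply isd_ext. eapply isd_eq.
      apply (isd_mult (fun _ => -1) (fun x => x ^ S k * hermite m'' x)). apply isd_const.
      apply (isd_mult (fun x => x ^ S k) (hermite m'')). apply isd_pow. apply hermite_der.
      rg. intros; simpl; ring.
    + apply gi_scal. exact IH.
    + intros x. simpl. rewrite hermite_S_dH. ring.
Qed.

Definition ucoef (f : R -> R) (d : nat) (a : nat -> R) : Prop :=
  (forall i, (d < i)%nat -> a i = 0) /\ forall x, f x = sum_f_R0 (fun i => a i * x ^ i) d.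
Definition ule f d := exists a, ucoef f d a.
Definition udeg f d := exists a, ucoef f d a /\ a d <> 0.

Lemma sum_ext_zero (g : nat -> R) d k : (forall i, (d < i)%nat -> g i = 0) ->
  sum_f_R0 g (d + k) = sum_f_R0 g d.
Proof.
  intros H. induction k. now rewrite Nat.add_0_r.
  rewrite Nat.add_succ_r. simpl. rewrite IHk, H by lia. ring.
Qed.

Lemma ucoef_weaken f d d' a : ucoef f d a -> (d <= d')%nat -> ucoef f d' a.
Proof.
  intros [H1 H2] Hd. split. intros; apply H1; lia.
  intros x. replace d' with (d + (d' - d))%nat by lia. rewrite sum_ext_zero. apply H2.
  intros i Hi. rewrite H1 by lia. ring.
Qed.

Lemma ucoef_ext f g d a : ucoef f d a -> (forall x, f x = g x) -> ucoef g d a.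
Proof. intros [H1 H2] E; split; auto. intros; rewrite <- E; auto. Qed.

Lemma ucoef_add f g d a b : ucoef f d a -> ucoef g d b ->
  ucoef (fun x => f x + g x) d (fun i => a i + b i).
Proof.
  intros [A1 A2] [B1 B2]; split. intros; rewrite A1, B1 by auto; ring.
  intros x; rewrite A2, B2, <- sum_plus. apply sum_eq; intros; ring.
Qed.

Lemma ucoef_scal c f d a : ucoef f d a -> ucoef (fun x => c * f x) d (fun i => c * a i).
Proof.
  intros [A1 A2]; split. intros; rewrite A1 by auto; ring.
  intros x; rewrite A2, scal_sum. apply sum_eq; intros; ring.
Qed.

Lemma ucoef_mulx f d a : ucoef f d a ->
  ucoef (fun x => x * f x) (S d) (fun i => match i with O => 0 | S j => a j end).
Proof.
  intros [A1 A2]; split. intros [|i] Hi; [lia|]. apply A1; lia.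
  intros x. rewrite (decomp_sum _ (S d)) by lia. simpl pred. rewrite A2, scal_sum.
  simpl. rewrite Rmult_0_l, Rplus_0_l. apply sum_eq; intros; simpl; ring.
Qed.

Lemma ucoef_const c : ucoef (fun _ => c) 0 (fun i => match i with O => c | S _ => 0 end).
Proof. split. intros [|i] Hi; [lia|auto]. intros x; simpl; ring. Qed.

Lemma ule_weaken f d d' : ule f d -> (d <= d')%nat -> ule f d'.
Proof. intros [a H] Hd; exists a; eapply ucoef_weaken; eauto. Qed.
Lemma ule_add f g d : ule f d -> ule g d -> ule (fun x => f x + g x) d.
Proof. intros [a Ha] [b Hb]; eexists; apply ucoef_add; eauto. Qed.
Lemma ule_scal c f d : ule f d -> ule (fun x => c * f x) d.
Proof. intros [a Ha]; eexists; apply ucoef_scal; eauto. Qed.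
Lemma ule_ext f g d : ule f d -> (forall x, f x = g x) -> ule g d.
Proof. intros [a Ha] E; exists a; eapply ucoef_ext; eauto. Qed.
Lemma ule_udeg f d : udeg f d -> ule f d.
Proof. intros [a [Ha _]]; exists a; auto. Qed.

Lemma udeg_ext f g d : udeg f d -> (forall x, f x = g x) -> udeg g d.
Proof. intros [a [Ha Hd]] E; exists a; split; auto; eapply ucoef_ext; eauto. Qed.
Lemma udeg_scal c f d : c <> 0 -> udeg f d -> udeg (fun x => c * f x) d.
Proof. intros Hc [a [Ha Hd]]; eexists; split. apply ucoef_scal; eauto. simpl. now apply Rmult_integral_contrapositive. Qed.
Lemma udeg_mulx f d : udeg f d -> udeg (fun x => x * f x) (S d).
Proof. intros [a [Ha Hd]]; eexists; split. apply ucoef_mulx; eauto. simpl; auto. Qed.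
Lemma udeg_add_low f g d d' : udeg f d -> ule g d' -> (d' < d)%nat -> udeg (fun x => f x + g x) d.
Proof.
  intros [a [Ha Hd]] [b Hb] Hlt. assert (Hb' := ucoef_weaken _ _ d _ Hb ltac:(lia)).
  eexists; split. apply ucoef_add; eauto. simpl. destruct Hb as [B1 _]. rewrite B1 by lia. rewrite Rplus_0_r; auto.
Qed.
Lemma udeg_const c : c <> 0 -> udeg (fun _ => c) 0.
Proof. intros Hc; eexists; split. apply ucoef_const. simpl; auto. Qed.

Lemma laguerre_pair_eq a n t : laguerre_pair a n t = (laguerre a n t, laguerre a (S n) t).
Proof.
  induction n. reflexivity.
  unfold laguerre at 2. simpl laguerre_pair at 2. rewrite IHn. simpl.
  unfold laguerre at 1. simpl. rewrite IHn. reflexivity.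
Qed.
Lemma laguerre_0 a t : laguerre a 0 t = 1. Proof. reflexivity. Qed.
Lemma laguerre_1 a t : laguerre a 1 t = 1 + a - t. Proof. reflexivity. Qed.
Lemma laguerre_SS a k t : laguerre a (S (S k)) t =
  ((2 * INR (S k) + 1 + a - t) * laguerre a (S k) t - (INR (S k) + a) * laguerre a k t) / INR (S (S k)).
Proof. unfold laguerre at 1. simpl laguerre_pair. rewrite laguerre_pair_eq. reflexivity. Qed.

Lemma hermite_4 k x : hermite (S (S (S (S k)))) x =
  (4 * x^2 - 2 * (2 * INR (S (S k)) + 1)) * hermite (S (S k)) x
  - 4 * INR (S (S k)) * INR (S k) * hermite k x.
Proof.
  rewrite (hermite_SS (S (S k))), (hermite_SS (S k)). rewrite (hermite_SS k).
  rewrite !S_INR. ring.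
Qed.

Definition kap (n : nat) : R := / (2 * (-4) ^ n * INR (Factorial.fact n)).

Lemma fact_INR_nz n : INR (Factorial.fact n) <> 0.
Proof. apply not_0_INR. apply Factorial.fact_neq_0. Qed.

Lemma odd_id n x : x * laguerre (1/2) n (x^2) = kap n * hermite (S (2 * n)) x.
Proof.
  revert x. cut (forall x, (x * laguerre (1/2) n (x^2) = kap n * hermite (S (2 * n)) x) /\
    (x * laguerre (1/2) (S n) (x^2) = kap (S n) * hermite (S (2 * S n)) x)).
  { intros H x; apply H. }
  induction n; intros x; split.
  - rewrite laguerre_0. unfold kap; simpl. rewrite hermite_1. field.
  - rewrite laguerre_1. unfold kap; simpl. rewrite !hermite_SS, hermite_1, hermite_0. simpl. field.
  - apply IHn.
  - destruct (IHn x) as [I0 I1].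
    rewrite laguerre_SS.
    replace (x * (((2 * INR (S n) + 1 + 1 / 2 - x ^ 2) * laguerre (1 / 2) (S n) (x ^ 2) -
       (INR (S n) + 1 / 2) * laguerre (1 / 2) n (x ^ 2)) / INR (S (S n)))) with
      (((2 * INR (S n) + 1 + 1 / 2 - x ^ 2) * (x * laguerre (1 / 2) (S n) (x ^ 2)) -
       (INR (S n) + 1 / 2) * (x * laguerre (1 / 2) n (x ^ 2))) / INR (S (S n))).
    2:{ field. apply not_0_INR; lia. }
    rewrite I0, I1.
    replace (S (2 * S (S n))) with (S (S (S (S (S (2 * n)))))) by lia.
    replace (S (2 * S n)) with (S (S (S (2 * n)))) by lia.
    rewrite (hermite_4 (S (2 * n))).
    unfold kap. rewrite !fact_simpl, !mult_INR.
    replace (INR (S (S (S (2 * n))))) with (2 * INR n + 3) by (rewrite !S_INR, mult_INR; simpl; ring).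
    replace (INR (S (S (2 * n)))) with (2 * INR n + 2) by (rewrite !S_INR, mult_INR; simpl; ring).
    rewrite !S_INR. simpl pow.
    pose proof (fact_INR_nz n). pose proof (pos_INR n).
    field. repeat split; try lra. 
    apply pow_nonzero; lra.
Qed.

Lemma lagC a k t : t * laguerre (a + 1) k t =
  (INR k + 1 + a) * laguerre a k t - INR (S k) * laguerre a (S k) t.
Proof.
  cut ((t * laguerre (a + 1) k t =
  (INR k + 1 + a) * laguerre a k t - INR (S k) * laguerre a (S k) t) /\
  (t * laguerre (a + 1) (S k) t =
  (INR (S k) + 1 + a) * laguerre a (S k) t - INR (S (S k)) * laguerre a (S (S k)) t)). tauto.
  induction k; split.
  - rewrite laguerre_0, laguerre_0, laguerre_1. simpl. ring.
  - rewrite laguerre_1, laguerre_1, laguerre_SS, laguerre_1, laguerre_0. simpl. field.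
  - apply IHk.
  - destruct IHk as [I0 I1].
    rewrite (laguerre_SS (a + 1)).
    replace (t * (((2 * INR (S k) + 1 + (a + 1) - t) * laguerre (a + 1) (S k) t -
        (INR (S k) + (a + 1)) * laguerre (a + 1) k t) / INR (S (S k)))) with
      (((2 * INR (S k) + 1 + (a + 1) - t) * (t * laguerre (a + 1) (S k) t) -
        (INR (S k) + (a + 1)) * (t * laguerre (a + 1) k t)) / INR (S (S k))).
    2:{ field. apply not_0_INR; lia. }
    rewrite I0, I1. rewrite (laguerre_SS a (S k)), (laguerre_SS a k).
    rewrite !S_INR. pose proof (pos_INR k). field. lra.
Qed.

Lemma pf_comp f g : pf f -> pf g -> pf (fun x => f (g x)).
Proof.
  intros Hf Hg; induction Hf.
  - apply pf_c.
  - eapply pf_ext. apply Hg. intros; reflexivity.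
  - apply (pf_add (fun x => f (g x)) (fun x => g0 (g x))); auto.
  - apply (pf_mul (fun x => f (g x)) (fun x => g0 (g x))); auto.
  - eapply pf_ext. apply IHHf. intros; simpl; auto.
Qed.

Lemma pf_laguerre a n : pf (laguerre a n).
Proof.
  cut (pf (laguerre a n) /\ pf (laguerre a (S n))). tauto.
  induction n; split.
  - eapply pf_ext. apply (pf_c 1). intros; rewrite laguerre_0; auto.
  - eapply pf_ext. apply (pf_add (fun _ => 1 + a) (fun t => -1 * t)). apply pf_c. apply pf_scal, pf_x.
    intros; rewrite laguerre_1; ring.
  - tauto.
  - eapply pf_ext.
    apply (pf_add (fun t => ((2 * INR (S n) + 1 + a) / INR (S (S n)) + (-1/INR (S (S n))) * t) * laguerre a (S n) t)
                  (fun t => (- (INR (S n) + a) / INR (S (S n))) * laguerre a n t)).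
    apply (pf_mul (fun t => ((2 * INR (S n) + 1 + a) / INR (S (S n)) + (-1/INR (S (S n))) * t))).
    apply (pf_add (fun _ => _)). apply pf_c. apply pf_scal, pf_x. tauto. apply pf_scal; tauto.
    intros t. rewrite laguerre_SS. field. apply not_0_INR; lia.
Qed.

Lemma pf_lag2 a n : pf (fun x => laguerre a n (x ^ 2)).
Proof. apply (pf_comp (laguerre a n) (fun x => x ^ 2)). apply pf_laguerre. apply pf_pow. Qed.

Lemma udeg_hermite n : udeg (hermite n) n.
Proof.
  cut (udeg (hermite n) n /\ udeg (hermite (S n)) (S n)). tauto.
  induction n; split.
  - eapply udeg_ext. apply (udeg_const 1); lra. intros; rewrite hermite_0; auto.
  - eapply udeg_ext. apply udeg_mulx. apply (udeg_const 2); lra. intros; rewrite hermite_1; ring.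
  - tauto.
  - eapply udeg_ext. apply (udeg_add_low (fun x => x * (2 * hermite (S n) x)) (fun x => (- (2 * INR (S n))) * hermite n x) _ n).
    apply udeg_mulx. apply udeg_scal. lra. apply (proj2 IHn).
    apply ule_scal, ule_udeg, (proj1 IHn). lia.
    intros x; rewrite hermite_SS; ring.
Qed.

Lemma udeg_lag2 a n : udeg (fun x => laguerre a n (x ^ 2)) (2 * n).
Proof.
  cut (udeg (fun x => laguerre a n (x ^ 2)) (2 * n) /\ udeg (fun x => laguerre a (S n) (x ^ 2)) (2 * S n)). tauto.
  induction n; split.
  - eapply udeg_ext. apply (udeg_const 1); lra. intros; rewrite laguerre_0; auto.
  - replace (2 * 1)%nat with 2%nat by lia.
    eapply udeg_ext. apply (udeg_add_low (fun x => x * (x * (-1))) (fun _ => 1 + a) _ 0).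
    apply udeg_mulx, udeg_mulx, udeg_const. lra. eexists; apply ucoef_const. lia.
    intros x. rewrite laguerre_1. simpl. ring.
  - tauto.
  - destruct IHn as [I0 I1].
    assert (Hd : INR (S (S n)) <> 0) by (apply not_0_INR; lia).
    replace (2 * S (S n))%nat with (S (S (2 * S n))) by lia.
    eapply udeg_ext. apply (udeg_add_low (fun x => x * (x * ((-1 / INR (S (S n))) * laguerre a (S n) (x^2))))
        (fun x => ((2 * INR (S n) + 1 + a) / INR (S (S n))) * laguerre a (S n) (x^2)
                + (- (INR (S n) + a) / INR (S (S n))) * laguerre a n (x^2)) _ (2 * S n)).
    apply udeg_mulx, udeg_mulx, udeg_scal. 2: apply I1.
    unfold Rdiv. apply Rmult_integral_contrapositive; split. lra. apply Rinv_neq_0_compat; auto.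
    apply ule_add. apply ule_scal, ule_udeg, I1. apply ule_scal. eapply ule_weaken. apply ule_udeg, I0. lia. lia.
    intros x. rewrite laguerre_SS. simpl. field. auto.
Qed.

Lemma sum_single (g : nat -> R) N : (forall j, (0 < j)%nat -> g j = 0) -> sum_f_R0 g N = g 0%nat.
Proof. intros H; induction N; simpl; auto. rewrite IHN, (H (S N)) by lia. ring. Qed.

Lemma sum_plus_first (g : nat -> R) K N :
  sum_f_R0 (fun i => g i + match i with O => K | S _ => 0 end) N = sum_f_R0 g N + K.
Proof. induction N; simpl; auto. rewrite IHN. ring. Qed.

Lemma poly2_from_udeg f d s (Y : R -> R -> R) : udeg f d -> (1 <= d)%nat ->
  (forall x y, Y x y = f x + s * (f y - f 0)) -> poly2_deg Y d.
Proof.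
  intros [a [[A1 A2] Ad]] Hd HY.
  exists (fun i j => match j with O => a i | S _ => match i with O => s * a j | S _ => 0 end end).
  split; [|split].
  - intros [|i] [|j] Hij; auto; try apply A1; try lia. rewrite A1 by lia; ring.
  - exists d, 0%nat; split; auto; lia.
  - intros x y. unfold poly2_eval. rewrite HY.
    assert (F0 : f 0 = a 0%nat).
    { rewrite A2. rewrite sum_single. simpl; ring. intros j Hj. rewrite pow_i by lia. ring. }
    rewrite F0.
    rewrite (sum_eq _ (fun i => a i * x ^ i + match i with O => s * (f y - a 0%nat) | S _ => 0 end)).
    + rewrite sum_plus_first, <- A2. ring.
    + intros [|i] Hi.
      * rewrite (sum_eq _ (fun j => (a j * y ^ j) * s + match j with O => a 0%nat - s * a 0%nat | S _ => 0 end)).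
        rewrite sum_plus_first, <- scal_sum, <- A2. simpl; ring.
        intros [|j] Hj; simpl; ring.
      * rewrite sum_single. simpl; ring. intros [|j] Hj; [lia|]. ring.
Qed.

Lemma poly2_axes g N : poly2_deg_le g N -> exists cx cy : nat -> R, cx 0%nat = cy 0%nat /\
  (forall x, g x 0 = sum_f_R0 (fun i => cx i * x ^ i) N) /\
  (forall y, g 0 y = sum_f_R0 (fun j => cy j * y ^ j) N).
Proof.
  intros [c [_ Hc]]. exists (fun i => c i 0%nat), (fun j => c 0%nat j). split; [auto|split].
  - intros x. rewrite Hc. unfold poly2_eval. apply sum_eq; intros i _.
    rewrite sum_single. simpl; ring. intros j Hj; rewrite pow_i by lia; ring.
  - intros y. rewrite Hc. unfold poly2_eval. rewrite sum_single. apply sum_eq; intros; simpl; ring.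
    intros i Hi. rewrite (sum_eq _ (fun _ => 0)). clear. induction N; simpl; try rewrite IHN; ring.
    intros; rewrite pow_i by lia; ring.
Qed.

Lemma gi_sum (phi : R -> R) L c N : gi (fun x => phi x * exp (- x^2)) L ->
  (forall i, (1 <= i <= N)%nat -> gi (fun x => x ^ i * phi x * exp (- x^2)) 0) ->
  gi (fun x => phi x * sum_f_R0 (fun i => c i * x ^ i) N * exp (- x^2)) (c 0%nat * L).
Proof.
  intros H0 H; induction N.
  - eapply gi_ext. apply gi_scal, H0. intros; simpl; ring.
  - replace (c 0%nat * L) with (c 0%nat * L + c (S N) * 0) by ring.
    eapply gi_ext. apply gi_plus. apply IHN. intros; apply H; lia. apply gi_scal. apply (H (S N)); lia.
    intros x; simpl; ring.
Qed.

Lemma axes_gen (Y g : R -> R -> R) N phi s L : (forall x, Y x 0 = phi x) ->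
  (forall y, Y 0 y = s * phi y) -> gi (fun x => phi x * exp (- x^2)) L ->
  (forall i, (1 <= i <= N)%nat -> gi (fun x => x ^ i * phi x * exp (- x^2)) 0) ->
  (s = -1 \/ L = 0) -> poly2_deg_le g N -> axes_orth Y g.
Proof.
  intros HX HY HL Hi Hs Hg. destruct (poly2_axes g N Hg) as [cx [cy [E0 [Ex Ey]]]].
  exists (cx 0%nat * L), (s * (cy 0%nat * L)). split; [|split].
  - apply gi_improper. eapply gi_ext. apply (gi_sum phi L cx N); auto.
    intros x; simpl. rewrite HX, Ex. ring.
  - apply gi_improper. eapply gi_ext. apply gi_scal, (gi_sum phi L cy N); auto.
    intros y; simpl. rewrite HY, Ey. ring.
  - rewrite E0. destruct Hs as [-> | ->]; ring.
Qed.

Lemma axes_pair (Y Z : R -> R -> R) phi psi : (forall x, Y x 0 = phi x) -> (forall y, Y 0 y = phi y) ->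
  (forall x, Z x 0 = psi x) -> (forall y, Z 0 y = - psi y) -> pf phi -> pf psi -> axes_orth Y Z.
Proof.
  intros H1 H2 H3 H4 P1 P2.
  destruct (gi_pf (fun x => phi x * psi x)) as [l Hl]. apply (pf_mul phi psi); auto.
  exists l, ((-1) * l). split; [|split].
  - apply gi_improper. eapply gi_ext. apply Hl. intros; simpl; rewrite H1, H3; ring.
  - apply gi_improper. eapply gi_ext. apply gi_scal, Hl. intros; simpl; rewrite H2, H4; ring.
  - ring.
Qed.

Lemma gi_val h l l' : gi h l -> l = l' -> gi h l'.
Proof. intros H <-; exact H. Qed.

Lemma Y2_facts m : (1 <= m)%nat -> poly2_deg (Y2 m) m /\
  forall i, (1 <= i <= m - 1)%nat -> gi (fun x => x ^ i * Y2 m x 0 * exp (- x^2)) 0.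
Proof.
  intros hm. destruct (Nat.Even_or_Odd m) as [[p Hp]|[p Hp]]; subst m.
  - destruct p as [|q]; [lia|].
    assert (Ev : Nat.even (2 * S q) = true) by apply (Nat.even_add_mul_2 0 (S q)).
    assert (EY : forall x y, Y2 (2 * S q) x y = x^2 * laguerre (3/2) q (x^2) - y^2 * laguerre (3/2) q (y^2)).
    { intros x y. unfold Y2. rewrite Ev, Nat.div2_double. replace (S q - 1)%nat with q by lia. reflexivity. }
    split.
    + apply (poly2_from_udeg (fun x => x * (x * laguerre (3/2) q (x^2))) _ (-1)).
      replace (2 * S q)%nat with (S (S (2 * q))) by lia.
      apply udeg_mulx, udeg_mulx, udeg_lag2. lia.
      intros x y. rewrite EY. simpl; ring.
    + intros i Hi. destruct i as [|j]; [lia|].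
      set (al := (INR q + 1 + 1/2) * kap q). set (be := - INR (S q) * kap (S q)).
      assert (K : forall x, x * (x^2 * laguerre (3/2) q (x^2)) =
                 al * hermite (S (2*q)) x + be * hermite (S (2 * S q)) x).
      { intros x. replace (3/2) with (1/2+1) by field.
        replace (x * (x^2 * laguerre (1/2+1) q (x^2))) with (x * ((x^2) * laguerre (1/2+1) q (x^2))) by ring.
        rewrite lagC.
        replace (x * ((INR q + 1 + 1 / 2) * laguerre (1 / 2) q (x ^ 2) - INR (S q) * laguerre (1 / 2) (S q) (x ^ 2)))
          with ((INR q + 1 + 1 / 2) * (x * laguerre (1 / 2) q (x ^ 2)) - INR (S q) * (x * laguerre (1 / 2) (S q) (x ^ 2))) by ring.
        rewrite !odd_id. unfold al, be. ring. }
      apply (gi_val _ (al * 0 + be * 0)); [|ring].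
      eapply gi_ext. apply gi_plus. apply gi_scal, (hermite_orth j (S (2*q))); lia. apply gi_scal, (hermite_orth j (S (2 * S q))); lia.
      intros x. cbv beta. rewrite EY.
      replace (x ^ S j * (x ^ 2 * laguerre (3 / 2) q (x ^ 2) - 0 ^ 2 * laguerre (3 / 2) q (0 ^ 2)))
        with (x ^ j * (x * (x ^ 2 * laguerre (3 / 2) q (x ^ 2)))) by (simpl; ring).
      rewrite K. ring.
  - replace (2 * p + 1)%nat with (S (2 * p)) in * by lia.
    assert (Ev : Nat.even (S (2 * p)) = false) by apply (Nat.even_add_mul_2 1 p).
    assert (EY : forall x y, Y2 (S (2 * p)) x y = x * laguerre (1/2) p (x^2) - y * laguerre (1/2) p (y^2)).
    { intros x y. unfold Y2. rewrite Ev, Nat.div2_succ_double. reflexivity. }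
    split.
    + apply (poly2_from_udeg (fun x => x * laguerre (1/2) p (x^2)) _ (-1)).
      apply udeg_mulx, udeg_lag2. lia.
      intros x y. rewrite EY. simpl; ring.
    + intros i Hi.
      apply (gi_val _ (kap p * 0)); [|ring].
      eapply gi_ext. apply gi_scal. apply (hermite_orth i (S (2 * p))). lia.
      intros x. cbv beta. rewrite EY.
      replace (x ^ i * (x * laguerre (1 / 2) p (x ^ 2) - 0 * laguerre (1 / 2) p (0 ^ 2)))
        with (x ^ i * (x * laguerre (1 / 2) p (x ^ 2))) by ring.
      rewrite odd_id. ring.
Qed.

Theorem proposition6p3 (m : nat) (hm : (1 <= m)%nat) :
  poly2_deg (Y1 m) m /\ poly2_deg (Y2 m) m /\
  (forall g : R -> R -> R, poly2_deg_le g (m - 1) ->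
     axes_orth (Y1 m) g /\ axes_orth (Y2 m) g) /\
  axes_orth (Y1 m) (Y2 m).
Proof.
  assert (HY1x : forall x, Y1 m x 0 = hermite m x) by (intros; unfold Y1; ring).
  assert (HY1y : forall y, Y1 m 0 y = hermite m y) by (intros; unfold Y1; ring).
  assert (HY2y : forall y, Y2 m 0 y = - Y2 m y 0) by (intros; unfold Y2; destruct (Nat.even m); ring).
  assert (P2 : pf (fun x => Y2 m x 0)).
  { unfold Y2; destruct (Nat.even m).
    - eapply pf_ext. apply (pf_add (fun x => x^2 * laguerre (3/2) (Nat.div2 m - 1) (x^2))
        (fun _ => (-1) * (0^2 * laguerre (3/2) (Nat.div2 m - 1) (0^2)))).
      apply (pf_mul (fun x => x^2)). apply pf_pow. apply pf_lag2. apply pf_c. intros; simpl; ring.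
    - eapply pf_ext. apply (pf_add (fun x => x * laguerre (1/2) (Nat.div2 m) (x^2))
        (fun _ => (-1) * (0 * laguerre (1/2) (Nat.div2 m) (0^2)))).
      apply (pf_mul (fun x => x)). apply pf_x. apply pf_lag2. apply pf_c. intros; simpl; ring. }
  assert (Hh0 : gi (fun x => hermite m x * exp (- x^2)) 0).
  { eapply gi_ext. apply (hermite_orth 0 m). lia. intros; simpl; ring. }
  destruct (Y2_facts m hm) as [D2 O2].
  destruct (gi_pf _ P2) as [L2 HL2].
  split; [|split; [auto|split]].
  - apply (poly2_from_udeg (hermite m) m 1). apply udeg_hermite. auto. intros; unfold Y1; ring.
  - intros g Hg. split.
    + apply (axes_gen (Y1 m) g (m - 1) (hermite m) 1 0); auto.
      intros; rewrite HY1y; ring.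
      intros i Hi. apply hermite_orth; lia.
    + apply (axes_gen (Y2 m) g (m - 1) (fun x => Y2 m x 0) (-1) L2); auto.
      intros; rewrite HY2y; ring.
  - apply (axes_pair (Y1 m) (Y2 m) (hermite m) (fun x => Y2 m x 0)); auto. apply pf_hermite.
Qed.
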